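(* Let $(X,\mu)$ be a Lebesgue space with a continuous probability measure $\mu$, and let $\rho_1,\rho_2$ be admissible metrics on $X$ that coincide $(\mu\times\mu)$-almost everywhere on $X\times X$. Then there exists a subset $X'\subset X$ of full $\mu$-measure such that $\rho_1(x,y)=\rho_2(x,y)$ for all $x,y\in X'$.
   Context: A metric on a Lebesgue space is admissible if its restriction to some set of full measure is a separable metric space. *)

(* Defs.v *)
From HB Require Import structures.
From mathcomp Require Import all_boot all_order all_algebra.
From mathcomp Require Import all_classical all_reals all_analysis.
Set Implicit Arguments. Unset Strict Implicit. Unset Printing Implicit Defensive.
Import Order.TTheory GRing.Theory Num.Theory.
Local Open Scope classical_set_scope.
Local Open Scope ring_scope.

Definition is_metric (T : Type) (R : realType) (rho : T -> T -> R) : Prop :=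
  [/\ forall x y, 0 <= rho x y,
      forall x y, rho x y = 0 <-> x = y,
      forall x y, rho x y = rho y x &
      forall x y z, rho x z <= rho x y + rho y z].

Definition separable_on (T : Type) (R : realType) (rho : T -> T -> R) (S : set T) : Prop :=
  exists D : set T, [/\ D `<=` S, countable D &
    forall x, S x -> forall e : R, 0 < e -> exists2 z, D z & rho x z < e].

Definition full_measure d (T : measurableType d) (R : realType)
  (mu : set T -> \bar R) (S : set T) : Prop :=
  measurable S /\ mu (~` S) = 0%E.

Definition admissible_metric d (T : measurableType d) (R : realType)
  (mu : set T -> \bar R) (rho : T -> T -> R) : Prop :=
  [/\ is_metric rho,
      measurable_fun [set: T * T] (fun p : T * T => rho p.1 p.2) &
      exists S : set T, full_measure mu S /\ separable_on rho S].

(* (T, mu) is a Lebesgue space with continuous measure: it is isomorphic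
   mod 0 to the unit interval [0,1] with Lebesgue measure, i.e. there are
   full-measure sets X0 in T and Y0 in [0,1] and a bijection f : X0 -> Y0,
   bi-measurable and measure preserving. *)
Definition lebesgue_space_iso d (T : measurableType d) (R : realType)
  (mu : set T -> \bar R) : Prop :=
  exists (X0 : set T) (Y0 : set R) (f : T -> R),
    [/\ full_measure mu X0,
        measurable Y0 /\ Y0 `<=` `[0, 1],
        (lebesgue_measure : set R -> \bar R) (`[0, 1] `\` Y0) = 0%E,
        set_bij X0 Y0 f &
        measurable_fun X0 f /\
        forall A : set T, measurable A ->
          measurable (f @` (X0 `&` A)) /\
          mu (X0 `&` A) = (lebesgue_measure : set R -> \bar R) (f @` (X0 `&` A))].

Definition continuous_measure d (T : measurableType d) (R : realType)
  (mu : set T -> \bar R) : Prop :=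
  forall x : T, exists A : set T, [/\ measurable A, A x & mu A = 0%E].

(* Main.v *)
Require Import Defs.
From HB Require Import structures.
From mathcomp Require Import all_boot all_order all_algebra.
From mathcomp Require Import all_classical all_reals all_analysis.
From mathcomp Require Import lra.
Import Order.TTheory GRing.Theory Num.Theory.
Local Open Scope classical_set_scope.
Local Open Scope ring_scope.

Lemma enum_countable (T : Type) (t0 : T) (D : set T) :
  countable D -> exists g : nat -> T, forall x, D x -> exists n, g n = x.
Proof.
move=> /countable_injP[f injf].
exists ('pinv_(fun=> t0) D f) => x Dx; exists (f x).
by rewrite pinvKV // inE.
Qed.

Lemma ball_meas d (T : measurableType d) (R : realType) (rho : T -> T -> R)
  (c : T) (r : R) :
  measurable_fun [set: T * T] (fun p : T * T => rho p.1 p.2) ->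
  measurable [set z | rho c z < r].
Proof.
move=> mr.
have mh : measurable_fun [set: T] (fun z => rho c z).
  exact: (measurableT_comp mr (pair1_measurable c)).
have := mh measurableT _ (measurable_itv `]-oo, r[); rewrite setTI.
congr measurable; apply/seteqP; split => z /=; rewrite in_itv /=; by [].
Qed.

Theorem mainTheorem3 (d : measure_display) (T : measurableType d) (R : realType)
  (mu : probability T R)
  (HLeb : lebesgue_space_iso mu) (Hcont : continuous_measure mu)
  (rho1 rho2 : T -> T -> R)
  (H1 : admissible_metric mu rho1) (H2 : admissible_metric mu rho2)
  (Hae : {ae (mu \x mu)%E, forall p : T * T, rho1 p.1 p.2 = rho2 p.1 p.2}) :
  exists X' : set T, full_measure mu X' /\
    forall x y, X' x -> X' y -> rho1 x y = rho2 x y.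
Proof.
case: H1 => [[r1p r1z r1s r1t] mr1 [S1 [[mS1 nS1] [D1 [D1S1 cD1 dD1]]]]].
case: H2 => [[r2p r2z r2s r2t] mr2 [S2 [[mS2 nS2] [D2 [D2S2 cD2 dD2]]]]].
case: Hae => N [mN N0 EN].
pose f := fun x => mu (xsection N x).
have mf := measurable_fun_xsection mu mN.
have f0 : (\int[mu]_(x in [set: T]) `|f x| = 0)%E.
  rewrite -N0 /product_measure1; apply: eq_integral => x _.
  by rewrite gee0_abs.
have [M [mM M0 HM]] := (ae_eq_integral_abs mu measurableT mf).1 f0.
have [t0 _] : exists t : T, S1 t.
  apply: contrapT => hS.
  have S1e : ~` S1 = setT by apply/seteqP; split => // t _ S1t; apply: hS; exists t.
  by move: nS1; rewrite S1e probability_setT => /eqP; rewrite onee_eq0.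
have [g1 hg1] := @enum_countable _ t0 _ cD1.
have [g2 hg2] := @enum_countable _ t0 _ cD2.
pose A i j n := [set z | rho1 (g1 i) z < n.+1%:R^-1] `&`
                [set z | rho2 (g2 j) z < n.+1%:R^-1].
have mA : forall i j n, measurable (A i j n).
  by move=> i j n; apply: measurableI; apply: ball_meas.
have nB : mu.-negligible (\bigcup_i \bigcup_j \bigcup_n
                           [set z | mu (A i j n) = 0 /\ A i j n z]).
  apply: negligible_bigcup => i; apply: negligible_bigcup => j.
  apply: negligible_bigcup => n.
  have [A0|A0] := pselect (mu (A i j n) = 0).
    by apply: (negligibleS (A := A i j n)); [move=> z []|exact/negligibleP].
  by apply: (negligibleS (A := set0)); [move=> z []|exact: negligible_set0].
case: nB => B [mB B0 BB].
exists (S1 `&` S2 `&` ~` M `&` ~` B); split.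
  split.
    by apply: measurableI; [apply: measurableI;
      [apply: measurableI|apply: measurableC]|apply: measurableC].
  apply/negligibleP.
    by apply: measurableC; apply: measurableI; [apply: measurableI;
      [apply: measurableI|apply: measurableC]|apply: measurableC].
  apply: (negligibleS (A := ~` S1 `|` ~` S2 `|` M `|` B)).
    move=> z hz; apply: contrapT => hh; apply: hz.
    split; [split; [split|]|].
    - by apply: contrapT => ?; apply: hh; left; left; left.
    - by apply: contrapT => ?; apply: hh; left; left; right.
    - by move=> ?; apply: hh; left; right.
    - by move=> ?; apply: hh; right.
  apply: negligibleU; last by exists B; split.
  apply: negligibleU; last by exists M; split.
  apply: negligibleU.
    by exists (~` S1); split => //; apply: measurableC.
  by exists (~` S2); split => //; apply: measurableC.
move=> x y [[[S1x S2x] Mx] Bx] [[[S1y S2y] My] By].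
apply: contrapT => hne.
have e0 : 0 < `|rho1 x y - rho2 x y| by rewrite normr_gt0 subr_eq0; apply/eqP.
have e40 : 0 < `|rho1 x y - rho2 x y| / 4 by rewrite divr_gt0.
have [n] := ltr_add_invr e40; rewrite add0r => hn.
have δ0 : 0 < n.+1%:R^-1 :> R by rewrite invr_gt0 ltr0n.
have [c1 Dc1 hc1] := dD1 y S1y _ δ0.
have [c2 Dc2 hc2] := dD2 y S2y _ δ0.
have [i hi] := hg1 c1 Dc1.
have [j hj] := hg2 c2 Dc2.
have Ay : A i j n y by split => /=; [rewrite hi r1s|rewrite hj r2s].
have muA : mu (A i j n) <> 0.
  move=> h; apply: By; apply: BB; exists i => //; exists j => //; exists n => //.
have fx : mu (xsection N x) = 0.
  apply: contrapT => h; apply: Mx; apply: HM => /= H; apply: h; exact: H.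
have [z Az Nz] : exists2 z, A i j n z & ~ N (x, z).
  apply: contrapT => hc; apply: muA; apply/eqP; rewrite -measure_le0 -fx.
  apply: le_measure; rewrite ?inE //; first exact: measurable_xsection.
  move=> w Aw; rewrite /xsection /= inE; apply: contrapT => nw; apply: hc.
  by exists w.
have ez : rho1 x z = rho2 x z by apply: contrapT => h; apply: Nz; apply: EN.
case: Az; rewrite /= hi hj => a1 a2.
have t1 := r1t y c1 z.
have t2 := r1t x y z.
have t3 := r1t x z y.
have s1 := r1s z y.
have u1 := r2t y c2 z.
have u2 := r2t x y z.
have u3 := r2t x z y.
have s2 := r2s z y.
have [e ee] : exists e : R, e = `|rho1 x y - rho2 x y| by eexists.
rewrite -ee in hn e40 e0.
have hb : - e < rho1 x y - rho2 x y < e.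
  move: hn hc1 hc2 a1 a2 t1 t2 t3 s1 u1 u2 u3 s2 ez e0.
  move: (n.+1%:R^-1) (rho1 x y) (rho2 x y) (rho1 x z) (rho2 x z) => δ p q p' q'.
  move: (rho1 y z) (rho1 z y) (rho1 y c1) (rho1 c1 z) => a b c d'.
  move: (rho2 y z) (rho2 z y) (rho2 y c2) (rho2 c2 z) => a' b' c' d''.
  move=> *; apply/andP; split; lra.
have : e < e by rewrite [X in X < _]ee ltr_norml.
by rewrite ltxx.
Qed.
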